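(* There exists a constant $K$ such that $|\dot\lambda_{i,k}(\theta_0)|\le K/i$ for all $i\ge1$ and all $1\le k\le p+q+1$.
   Context: $d_0\in(-1/2,1/2)$; $a(z)=1-\sum_{i=1}^pa_iz^i$, $b(z)=1-\sum_{i=1}^qb_iz^i$ have all roots outside the unit disk and no common factors; $\theta_0=(a_1,\dots,a_p,b_1,\dots,b_q,d_0)$. For $\theta=(\theta_1,\dots,\theta_{p+q},d)$ near $\theta_0$, $a_\theta(z)=1-\sum_{i=1}^p\theta_iz^i$, $b_\theta(z)=1-\sum_{j=1}^q\theta_{p+j}z^j$, and $\dot\lambda_{i,k}(\theta)$ is the $i$-th coefficient of the power series $\frac{\partial}{\partial\theta_k}\big(b_\theta^{-1}(z)a_\theta(z)(1-z)^{d-d_0}a_{\theta_0}^{-1}(z)b_{\theta_0}(z)\big)$ (with $\theta_{p+q+1}=d$). *)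

(* Defs.v *)
From Stdlib Require Import Reals Arith.
From Coquelicot Require Import Coquelicot.
Open Scope R_scope.

Fixpoint csum (c : nat -> R) (m : nat) (z : C) : C :=
  match m with
  | O => RtoC 0
  | S m' => Cplus (csum c m' z) (Cmult (RtoC (c (S m'))) (Cpow z (S m')))
  end.

Definition lagpoly (c : nat -> R) (m : nat) (z : C) : C :=
  Cminus (RtoC 1) (csum c m z).

Definition roots_outside_unit_disk (c : nat -> R) (m : nat) : Prop :=
  forall z : C, Cmod z <= 1 -> lagpoly c m z <> RtoC 0.

Definition no_common_factor (c : nat -> R) (m : nat) (e : nat -> R) (l : nat) : Prop :=
  forall z : C, ~ (lagpoly c m z = RtoC 0 /\ lagpoly e l z = RtoC 0).

Definition poly_coef (c : nat -> R) (m : nat) (n : nat) : R :=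
  match n with
  | O => 1
  | S _ => if Nat.leb n m then - c n else 0
  end.

(* truncated table of coefficients of (1 - sum_{i=1}^m c_i z^i)^{-1}:
   e_0 = 1, e_n = sum_{j=1}^{min(n,m)} c_j e_{n-j}. *)
Fixpoint inv_table (c : nat -> R) (m : nat) (n : nat) : nat -> R :=
  match n with
  | O => fun k => if Nat.eqb k 0 then 1 else 0
  | S n' => fun k =>
      if Nat.eqb k (S n') then
        sum_f_R0 (fun j => if Nat.leb (S j) m
                           then c (S j) * inv_table c m n' (n' - j)%nat else 0) n'
      else inv_table c m n' k
  end.

Definition inv_coef (c : nat -> R) (m : nat) (n : nat) : R := inv_table c m n n.

(* n-th coefficient of (1 - z)^delta = sum_n binom(delta, n) (-z)^n *)
Fixpoint frac_coef (delta : R) (n : nat) : R :=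
  match n with
  | O => 1
  | S n' => frac_coef delta n' * (INR n' - delta) / INR (S n')
  end.

Definition cauchy (u v : nat -> R) (n : nat) : R :=
  sum_f_R0 (fun j => u j * v (n - j)%nat) n.

(** theta : nat -> R, coordinates theta_1 .. theta_{p+q+1} (theta_{p+q+1} = d). *)
Definition theta0 (p q : nat) (a b : nat -> R) (d0 : R) : nat -> R :=
  fun i => if Nat.leb i p then a i
           else if Nat.leb i (p + q) then b (i - p)%nat else d0.

(** lambda_i(theta): i-th coefficient of
    b_theta^{-1}(z) a_theta(z) (1-z)^{d-d0} a_{theta0}^{-1}(z) b_{theta0}(z). *)
Definition lambda (p q : nat) (a b : nat -> R) (d0 : R) (theta : nat -> R) (i : nat) : R :=
  cauchy
    (cauchy
      (cauchy
        (cauchy (inv_coef (fun j => theta (p + j)%nat) q) (poly_coef theta p))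
        (frac_coef (theta (p + q + 1)%nat - d0)))
      (inv_coef a p))
    (poly_coef b q) i.

Definition upd (theta : nat -> R) (k : nat) (t : R) : nat -> R :=
  fun i => if Nat.eqb i k then t else theta i.

(* Main.v *)
From Pilot Require Import Defs.
From Stdlib Require Import Reals Arith.
From Coquelicot Require Import Coquelicot.
Open Scope R_scope.
From Stdlib Require Import Lia Lra Classical.
Import Pilot.Defs.

Definition EB (u : nat -> R) := exists K rho, 0 <= rho < 1 /\ forall n, Rabs (u n) <= K * rho ^ n.
Definition WB (u : nat -> R) := exists K, forall n, (INR n + 1) * Rabs (u n) <= K.

Lemma sum_nonneg (f : nat -> R) n : (forall j, 0 <= f j) -> 0 <= sum_f_R0 f n.
Proof. intros H; induction n; simpl; [apply H|]. specialize (H (S n)); lra. Qed.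

Lemma sum_ge_term (f : nat -> R) m n : (forall j, 0 <= f j) -> (n <= m)%nat -> f n <= sum_f_R0 f m.
Proof.
  intros H Hn; induction m.
  - replace n with 0%nat by lia; simpl; lra.
  - simpl. destruct (Nat.eq_dec n (S m)) as [->|Hne].
    + pose proof (sum_nonneg f m H); lra.
    + assert (n <= m)%nat by lia. specialize (IHm H0). specialize (H (S m)); lra.
Qed.

Lemma sum_scal_l (c : R) (f : nat -> R) n : sum_f_R0 (fun j => c * f j) n = c * sum_f_R0 f n.
Proof. induction n; simpl; [ring| rewrite IHn; ring]. Qed.

Lemma geo_sum_bound x n : 0 <= x < 1 -> sum_f_R0 (fun j => x ^ j) n <= / (1 - x).
Proof.
  intros Hx. pose proof (GP_finite x n) as G.
  assert (0 <= x ^ (n+1)) by (apply pow_le; lra).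
  apply (Rmult_le_reg_r (1 - x)); [lra|].
  rewrite Rinv_l by lra.
  replace (sum_f_R0 (fun j => x ^ j) n * (1 - x)) with (- (sum_f_R0 (fun n0 : nat => x ^ n0) n * (x - 1))) by ring.
  rewrite G. lra.
Qed.

Lemma lin_geo x : 0 <= x < 1 -> forall n, (INR n + 1) * x ^ n <= / (1 - x).
Proof.
  intros Hx n.
  assert (H : (INR n + 1) * x ^ n <= sum_f_R0 (fun j => x ^ j) n).
  { induction n.
    - simpl; lra.
    - rewrite S_INR. simpl sum_f_R0.
      assert (0 <= sum_f_R0 (fun j => x ^ j) n) by (apply sum_nonneg; intros; apply pow_le; lra).
      assert (0 <= x ^ n) by (apply pow_le; lra).
      simpl pow.
      assert (x * ((INR n + 1) * x ^ n) <= x * sum_f_R0 (fun j : nat => x ^ j) n)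
        by (apply Rmult_le_compat_l; lra).
      assert (x * sum_f_R0 (fun j : nat => x ^ j) n <= sum_f_R0 (fun j : nat => x ^ j) n) by nra.
      nra. }
  pose proof (geo_sum_bound x n Hx); lra.
Qed.

Lemma slack rho : 0 <= rho < 1 -> exists sigma K, 0 <= sigma < 1 /\ 0 <= K /\
  forall n, (INR n + 1) * rho ^ n <= K * sigma ^ n.
Proof.
  intros Hr. set (s := (1 + rho) / 2). set (x := rho / s).
  assert (Hs : 0 < s < 1) by (unfold s; lra).
  assert (Hx : 0 <= x < 1).
  { unfold x; split; [apply Rdiv_le_0_compat; lra|].
    apply (Rmult_lt_reg_r s); [lra|]. unfold Rdiv; rewrite Rmult_assoc, Rinv_l by lra. unfold s; lra. }
  exists s, (/ (1 - x)). split; [lra|]. split; [left; apply Rinv_0_lt_compat; lra|].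
  intros n. replace rho with (x * s) by (unfold x; field; lra).
  rewrite Rpow_mult_distr.
  assert (0 <= s ^ n) by (apply pow_le; lra).
  pose proof (lin_geo x Hx n). nra.
Qed.

Lemma EB_ext u v : (forall n, u n = v n) -> EB v -> EB u.
Proof. intros H [K [r [Hr Hb]]]. exists K, r. split; auto. intros n; rewrite H; auto. Qed.

Lemma WB_ext u v : (forall n, u n = v n) -> WB v -> WB u.
Proof. intros H [K Hb]. exists K. intros n; rewrite H; auto. Qed.

Lemma EB_K u : EB u -> exists K rho, 0 <= K /\ 0 <= rho < 1 /\ forall n, Rabs (u n) <= K * rho ^ n.
Proof.
  intros [K [r [Hr Hb]]]. exists K, r. split; auto.
  specialize (Hb 0%nat). simpl in Hb. pose proof (Rabs_pos (u 0%nat)). lra.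
Qed.

Lemma EB_WB u : EB u -> WB u.
Proof.
  intros H. destruct (EB_K u H) as [K [r [HK [Hr Hb]]]].
  exists (K * / (1 - r)). intros n.
  pose proof (lin_geo r Hr n). specialize (Hb n).
  assert (0 <= INR n + 1) by (pose proof (pos_INR n); lra).
  apply Rle_trans with ((INR n + 1) * (K * r ^ n)).
  - apply Rmult_le_compat_l; auto.
  - replace ((INR n + 1) * (K * r ^ n)) with (K * ((INR n + 1) * r ^ n)) by ring.
    apply Rmult_le_compat_l; auto.
Qed.

Lemma WB_plus u v : WB u -> WB v -> WB (fun n => u n + v n).
Proof.
  intros [K1 H1] [K2 H2]. exists (K1 + K2). intros n.
  pose proof (Rabs_triang (u n) (v n)). specialize (H1 n); specialize (H2 n).
  assert (0 <= INR n + 1) by (pose proof (pos_INR n); lra).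
  apply Rle_trans with ((INR n + 1) * (Rabs (u n) + Rabs (v n))).
  - apply Rmult_le_compat_l; auto.
  - lra.
Qed.

Lemma EB_opp u : EB u -> EB (fun n => - u n).
Proof. intros [K [r [Hr Hb]]]. exists K, r. split; auto. intros n; rewrite Rabs_Ropp; auto. Qed.

Lemma EB_zero : EB (fun _ => 0).
Proof. exists 0, 0. split; [lra|]. intros n; rewrite Rabs_R0; lra. Qed.

Lemma EB_delta : EB (fun n => if Nat.eqb n 0 then 1 else 0).
Proof.
  exists 1, 0. split; [lra|]. intros [|n]; simpl.
  - rewrite Rabs_R1; lra.
  - rewrite Rabs_R0; lra.
Qed.

Lemma EB_fin u m : (forall n, (m < n)%nat -> u n = 0) -> EB u.
Proof.
  intros H. exists (sum_f_R0 (fun j => Rabs (u j) * 2 ^ j) m), (/2).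
  split; [lra|]. intros n.
  destruct (le_lt_dec n m) as [Hn|Hn].
  - apply Rle_trans with (Rabs (u n) * 2 ^ n * (/2) ^ n).
    + rewrite Rmult_assoc, <- Rpow_mult_distr. replace (2 * / 2) with 1 by field.
      rewrite pow1; lra.
    + apply Rmult_le_compat_r; [apply pow_le; lra|].
      apply (sum_ge_term (fun j => Rabs (u j) * 2 ^ j)); auto.
      intros j; apply Rmult_le_pos; [apply Rabs_pos|apply pow_le; lra].
  - rewrite H by auto. rewrite Rabs_R0. apply Rmult_le_pos; [|apply pow_le; lra].
    apply sum_nonneg. intros j; apply Rmult_le_pos; [apply Rabs_pos|apply pow_le; lra].
Qed.

Lemma cauchy_abs_le u v n : Rabs (cauchy u v n) <= sum_f_R0 (fun j => Rabs (u j) * Rabs (v (n - j)%nat)) n.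
Proof.
  unfold cauchy. eapply Rle_trans; [apply sum_f_R0_triangle|].
  apply sum_Rle; intros j _. rewrite Rabs_mult; lra.
Qed.

Lemma EB_cauchy u v : EB u -> EB v -> EB (cauchy u v).
Proof.
  intros Hu Hv. destruct (EB_K u Hu) as [K1 [r1 [HK1 [Hr1 H1]]]].
  destruct (EB_K v Hv) as [K2 [r2 [HK2 [Hr2 H2]]]].
  set (r := Rmax r1 r2).
  assert (Hr : 0 <= r < 1) by (unfold r; unfold Rmax; destruct Rle_dec; lra).
  destruct (slack r Hr) as [s [K [Hs [HK Hb]]]].
  exists (K1 * K2 * K), s. split; auto. intros n.
  eapply Rle_trans; [apply cauchy_abs_le|].
  apply Rle_trans with (sum_f_R0 (fun _ => K1 * K2 * r ^ n) n).
  - apply sum_Rle; intros j Hj.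
    specialize (H1 j); specialize (H2 (n - j)%nat).
    apply Rle_trans with ((K1 * r1 ^ j) * (K2 * r2 ^ (n - j))).
    + apply Rmult_le_compat; auto using Rabs_pos.
    + replace (r ^ n) with (r ^ j * r ^ (n - j)) by (rewrite <- pow_add; f_equal; lia).
      assert (r1 ^ j <= r ^ j) by (apply pow_incr; unfold r; split; [lra| apply Rmax_l]).
      assert (r2 ^ (n-j) <= r ^ (n-j)) by (apply pow_incr; unfold r; split; [lra| apply Rmax_r]).
      assert (0 <= r1 ^ j) by (apply pow_le; lra).
      assert (0 <= r2 ^ (n-j)) by (apply pow_le; lra).
      replace (K1 * r1 ^ j * (K2 * r2 ^ (n - j))) with ((K1 * K2) * (r1 ^ j * r2 ^ (n - j))) by ring.
      replace (K1 * K2 * (r ^ j * r ^ (n - j))) with ((K1 * K2) * (r ^ j * r ^ (n - j))) by ring.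
      apply Rmult_le_compat_l; [nra|]. apply Rmult_le_compat; auto.
  - rewrite sum_cte. rewrite S_INR. specialize (Hb n).
    replace (K1 * K2 * r ^ n * (INR n + 1)) with ((K1 * K2) * ((INR n + 1) * r ^ n)) by ring.
    replace (K1 * K2 * K * s ^ n) with ((K1 * K2) * (K * s ^ n)) by ring.
    apply Rmult_le_compat_l; [nra|auto].
Qed.

Lemma WB_K u : WB u -> exists K, 0 <= K /\ forall n, (INR n + 1) * Rabs (u n) <= K.
Proof.
  intros [K H]. exists K. split; auto. specialize (H 0%nat). simpl in H.
  pose proof (Rabs_pos (u 0%nat)). lra.
Qed.

Lemma INR_prod_bound n j : (j <= n)%nat -> INR n + 1 <= (INR j + 1) * (INR (n - j) + 1).
Proof.
  intros Hj. rewrite minus_INR by auto. pose proof (pos_INR j).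
  assert (INR j <= INR n) by (apply le_INR; auto). nra.
Qed.

Lemma EW_cauchy u v : EB u -> WB v -> WB (cauchy u v).
Proof.
  intros Hu Hv. destruct (EB_K u Hu) as [K1 [r [HK1 [Hr H1]]]].
  destruct (WB_K v Hv) as [K2 [HK2 H2]].
  destruct (slack r Hr) as [s [K [Hs [HK Hb]]]].
  exists (K1 * K * K2 * / (1 - s)). intros n.
  assert (0 <= INR n + 1) by (pose proof (pos_INR n); lra).
  apply Rle_trans with ((INR n + 1) * sum_f_R0 (fun j => Rabs (u j) * Rabs (v (n - j)%nat)) n).
  { apply Rmult_le_compat_l; auto using cauchy_abs_le. }
  rewrite scal_sum.
  apply Rle_trans with (sum_f_R0 (fun j => K1 * K * K2 * s ^ j) n).
  - apply sum_Rle; intros j Hj.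
    pose proof (INR_prod_bound n j Hj).
    specialize (H1 j); specialize (H2 (n - j)%nat); specialize (Hb j).
    pose proof (Rabs_pos (u j)); pose proof (Rabs_pos (v (n - j)%nat)); pose proof (pos_INR j).
    pose proof (pos_INR (n - j)).
    apply Rle_trans with (((INR j + 1) * Rabs (u j)) * ((INR (n - j) + 1) * Rabs (v (n - j)%nat))).
    + replace (Rabs (u j) * Rabs (v (n - j)%nat) * (INR n + 1)) with
        ((INR n + 1) * (Rabs (u j) * Rabs (v (n - j)%nat))) by ring.
      replace ((INR j + 1) * Rabs (u j) * ((INR (n - j) + 1) * Rabs (v (n - j)%nat))) with
        (((INR j + 1) * (INR (n - j) + 1)) * (Rabs (u j) * Rabs (v (n - j)%nat))) by ring.
      apply Rmult_le_compat_r; [nra|auto].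
    + assert ((INR j + 1) * Rabs (u j) <= K1 * (K * s ^ j)).
      { apply Rle_trans with ((INR j + 1) * (K1 * r ^ j)); [apply Rmult_le_compat_l; lra|].
        replace ((INR j + 1) * (K1 * r ^ j)) with (K1 * ((INR j + 1) * r ^ j)) by ring.
        apply Rmult_le_compat_l; auto. }
      replace (K1 * K * K2 * s ^ j) with ((K1 * (K * s ^ j)) * K2) by ring.
      apply Rmult_le_compat; auto; nra.
  - rewrite sum_scal_l. apply Rmult_le_compat_l; [repeat apply Rmult_le_pos; lra|]. apply geo_sum_bound; auto.
Qed.

Lemma sum_rev (f : nat -> R) n : sum_f_R0 f n = sum_f_R0 (fun j => f (n - j)%nat) n.
Proof.
  revert f; induction n; intros f.
  - simpl; reflexivity.
  - simpl sum_f_R0 at 2. rewrite Nat.sub_diag.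
    rewrite decomp_sum by lia. simpl Nat.pred.
    rewrite (IHn (fun i => f (S i))).
    rewrite Rplus_comm. f_equal.
    apply sum_eq; intros i Hi. f_equal. destruct i; lia.
Qed.

Lemma cauchy_comm u v n : cauchy u v n = cauchy v u n.
Proof.
  unfold cauchy. rewrite sum_rev. apply sum_eq; intros j Hj.
  rewrite Rmult_comm. f_equal. f_equal. lia.
Qed.

Lemma WE_cauchy u v : WB u -> EB v -> WB (cauchy u v).
Proof.
  intros Hu Hv. apply WB_ext with (cauchy v u). intros n; apply cauchy_comm.
  apply EW_cauchy; auto.
Qed.

Lemma inv_table_stable c m n k : (k <= n)%nat -> inv_table c m n k = inv_table c m k k.
Proof.
  induction n; intros Hk.
  - replace k with 0%nat by lia. reflexivity.
  - destruct (Nat.eq_dec k (S n)) as [->|Hne]; [reflexivity|].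
    simpl. replace (Nat.eqb k (S n)) with false by (symmetry; apply Nat.eqb_neq; auto).
    apply IHn. lia.
Qed.

Lemma inv_coef_0 c m : inv_coef c m 0 = 1.
Proof. reflexivity. Qed.

Lemma inv_coef_S c m n : inv_coef c m (S n) =
  sum_f_R0 (fun j => if Nat.leb (S j) m then c (S j) * inv_coef c m (n - j)%nat else 0) n.
Proof.
  unfold inv_coef. simpl inv_table at 1. rewrite Nat.eqb_refl.
  apply sum_eq; intros j Hj. simpl Nat.leb. destruct m; [reflexivity|].
  destruct (Nat.leb j m); [|reflexivity].
  f_equal. apply inv_table_stable. lia.
Qed.

Lemma inv_table_ext c c' m : (forall j, (1 <= j <= m)%nat -> c j = c' j) ->
  forall n k, inv_table c m n k = inv_table c' m n k.
Proof.
  intros H n; induction n; intros k; simpl; [reflexivity|].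
  destruct (Nat.eqb k (S n)); [|apply IHn].
  apply sum_eq; intros j Hj. destruct m as [|m']; [reflexivity|].
  destruct (Nat.leb j m') eqn:E; [|reflexivity].
  apply Nat.leb_le in E. rewrite H by lia. rewrite IHn. reflexivity.
Qed.

Lemma inv_coef_ext c c' m n : (forall j, (1 <= j <= m)%nat -> c j = c' j) ->
  inv_coef c m n = inv_coef c' m n.
Proof. intros H; unfold inv_coef; apply inv_table_ext; auto. Qed.

Lemma poly_coef_ext c c' m n : (forall j, (1 <= j <= m)%nat -> c j = c' j) ->
  poly_coef c m n = poly_coef c' m n.
Proof.
  intros H; unfold poly_coef; destruct n; [reflexivity|].
  destruct (Nat.leb (S n) m) eqn:E; [|reflexivity].
  apply Nat.leb_le in E. rewrite H by lia; reflexivity.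
Qed.

Lemma csum_ext c c' m z : (forall j, (1 <= j <= m)%nat -> c j = c' j) ->
  csum c m z = csum c' m z.
Proof.
  induction m; intros H; simpl; [reflexivity|].
  rewrite IHm by (intros; apply H; lia). rewrite H by lia. reflexivity.
Qed.

Lemma roots_ext c c' m : (forall j, (1 <= j <= m)%nat -> c j = c' j) ->
  roots_outside_unit_disk c m -> roots_outside_unit_disk c' m.
Proof.
  intros H Hr z Hz. unfold lagpoly. rewrite <- (csum_ext c c' m z H). apply Hr; auto.
Qed.

Lemma sum_opp_f (f : nat -> R) n : sum_f_R0 (fun j => - f j) n = - sum_f_R0 f n.
Proof. induction n; simpl; [ring| rewrite IHn; ring]. Qed.

Lemma inv_identity c m n :
  cauchy (poly_coef c m) (inv_coef c m) n = if Nat.eqb n 0 then 1 else 0.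
Proof.
  unfold cauchy. destruct n.
  - simpl. unfold poly_coef. rewrite inv_coef_0. ring.
  - rewrite decomp_sum by lia. simpl Nat.pred. rewrite Nat.sub_0_r.
    replace (poly_coef c m 0) with 1 by reflexivity.
    rewrite (sum_eq _ (fun j => - (if Nat.leb (S j) m then c (S j) * inv_coef c m (n - j)%nat else 0))).
    + rewrite sum_opp_f, <- inv_coef_S. simpl. ring.
    + intros j Hj. unfold poly_coef. replace (S n - S j)%nat with (n - j)%nat by lia.
      destruct (Nat.leb (S j) m); ring.
Qed.

Lemma frac_coef_zero x n : x = 0 -> frac_coef x n = if Nat.eqb n 0 then 1 else 0.
Proof.
  intros ->. induction n; [reflexivity|]. simpl frac_coef. rewrite IHn.
  destruct n; simpl Nat.eqb; cbv iota; [simpl INR; field|].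
  unfold Rdiv; ring.
Qed.

Definition sder (u : R -> nat -> R) (t0 : R) (u' : nat -> R) :=
  forall n, is_derive (fun t => u t n) t0 (u' n).

Lemma is_derive_sumf (f : nat -> R -> R) (f' : nat -> R) t0 n :
  (forall j, (j <= n)%nat -> is_derive (f j) t0 (f' j)) ->
  is_derive (fun t => sum_f_R0 (fun j => f j t) n) t0 (sum_f_R0 f' n).
Proof.
  induction n; intros H; simpl.
  - apply H; lia.
  - apply (is_derive_plus (fun t => sum_f_R0 (fun j => f j t) n) (f (S n))).
    + apply IHn; intros; apply H; lia.
    + apply H; lia.
Qed.

Lemma ex_derive_sumf (f : nat -> R -> R) t0 n :
  (forall j, (j <= n)%nat -> ex_derive (f j) t0) ->
  ex_derive (fun t => sum_f_R0 (fun j => f j t) n) t0.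
Proof.
  induction n; intros H; simpl.
  - apply H; lia.
  - apply (ex_derive_plus (fun t => sum_f_R0 (fun j => f j t) n) (f (S n))).
    + apply IHn; intros; apply H; lia.
    + apply H; lia.
Qed.

Lemma is_derive_mult_R (f g : R -> R) t0 df dg :
  is_derive f t0 df -> is_derive g t0 dg ->
  is_derive (fun t => f t * g t) t0 (df * g t0 + f t0 * dg).
Proof.
  intros Hf Hg. apply (is_derive_mult f g t0 df dg Hf Hg). intros; apply Rmult_comm.
Qed.

Lemma sder_cauchy u u' v v' t0 : sder u t0 u' -> sder v t0 v' ->
  sder (fun t => cauchy (u t) (v t)) t0
       (fun n => cauchy u' (v t0) n + cauchy (u t0) v' n).
Proof.
  intros Hu Hv n. unfold cauchy.
  rewrite <- sum_plus.
  apply (is_derive_sumf (fun j t => u t j * v t (n - j)%nat)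
           (fun j => u' j * v t0 (n - j)%nat + u t0 j * v' (n - j)%nat)).
  intros j _. apply is_derive_mult_R; [apply Hu|apply Hv].
Qed.

Lemma sder_const (w : nat -> R) t0 : sder (fun _ => w) t0 (fun _ => 0).
Proof. intros n. apply (is_derive_const (w n) t0). Qed.

Definition poly_der (c' : nat -> R) (m : nat) (n : nat) : R :=
  match n with
  | O => 0
  | S _ => if Nat.leb n m then - c' n else 0
  end.

Lemma sder_poly (c : R -> nat -> R) c' m t0 :
  (forall j, is_derive (fun t => c t j) t0 (c' j)) ->
  sder (fun t => poly_coef (c t) m) t0 (poly_der c' m).
Proof.
  intros H n. unfold poly_coef, poly_der. destruct n.
  - apply (is_derive_const 1 t0).
  - destruct (Nat.leb (S n) m).
    + apply (is_derive_opp (fun t => c t (S n))). apply H.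
    + apply (is_derive_const 0 t0).
Qed.

Lemma EB_poly_der c' m : EB (poly_der c' m).
Proof.
  apply EB_fin with m. intros n Hn. unfold poly_der. destruct n; [reflexivity|].
  replace (Nat.leb (S n) m) with false by (symmetry; apply Nat.leb_gt; lia). reflexivity.
Qed.

Lemma EB_poly_coef c m : EB (poly_coef c m).
Proof.
  apply EB_fin with m. intros n Hn. unfold poly_coef. destruct n; [lia|].
  replace (Nat.leb (S n) m) with false by (symmetry; apply Nat.leb_gt; lia). reflexivity.
Qed.

Lemma is_derive_eq (f : R -> R) (x l l' : R) : is_derive f x l -> l = l' -> is_derive f x l'.
Proof. intros H <-; exact H. Qed.

Definition fracD (n : nat) : R :=
  match n with O => 0 | S k => - / (INR k + 1) end.

Lemma sder_frac (g : R -> R) (g' t0 : R) : g t0 = 0 -> is_derive g t0 g' ->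
  sder (fun t => frac_coef (g t)) t0 (fun n => g' * fracD n).
Proof.
  intros H0 Hg n. induction n.
  - simpl. apply is_derive_eq with 0; [apply (is_derive_const 1 t0)|ring].
  - simpl frac_coef.
    assert (Hd : is_derive (fun t => frac_coef (g t) n * (INR n - g t)) t0
                  (g' * fracD n * (INR n - g t0) + frac_coef (g t0) n * (0 - g'))).
    { apply (is_derive_mult_R (fun t => frac_coef (g t) n) (fun t => INR n - g t)); auto.
      eapply is_derive_eq.
      - apply (is_derive_minus (fun _ => INR n) g). apply (is_derive_const (INR n) t0). exact Hg.
      - reflexivity. }
    assert (Hd2 : is_derive (fun t => frac_coef (g t) n * (INR n - g t) * / INR (S n)) t0
      ((g' * fracD n * (INR n - g t0) + frac_coef (g t0) n * (0 - g')) * / INR (S n)))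
      by exact (is_derive_scal_l _ _ _ (/ INR (S n)) Hd).
    unfold Rdiv. eapply is_derive_eq; [exact Hd2|].
    rewrite H0, frac_coef_zero by reflexivity.
    rewrite S_INR. assert (0 <= INR n) by apply pos_INR.
    destruct n; simpl Nat.eqb; cbv iota; cbv [fracD].
    + simpl INR. field.
    + rewrite !S_INR. rewrite S_INR in H. pose proof (pos_INR n). field; repeat split; lra.
Qed.

Lemma WB_fracD (g' : R) : WB (fun n => g' * fracD n).
Proof.
  exists (2 * Rabs g'). intros [|n]; simpl fracD.
  - rewrite Rmult_0_r, Rabs_R0. pose proof (Rabs_pos g'). lra.
  - rewrite S_INR. assert (0 <= INR n) by apply pos_INR.
    rewrite Rabs_mult, Rabs_Ropp, Rabs_inv, (Rabs_right (INR n + 1)) by lra.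
    pose proof (Rabs_pos g').
    apply Rle_trans with (Rabs g' * ((INR n + 1 + 1) / (INR n + 1))).
    + right; field; lra.
    + rewrite Rmult_comm. apply Rmult_le_compat_r; auto.
      apply Rle_div_l; lra.
Qed.

Lemma sder_inv (c : R -> nat -> R) (c' : nat -> R) (t0 : R) m :
  (forall j, is_derive (fun t => c t j) t0 (c' j)) ->
  exists e', sder (fun t => inv_coef (c t) m) t0 e' /\
    forall n, cauchy (poly_coef (c t0) m) e' n = - cauchy (poly_der c' m) (inv_coef (c t0) m) n.
Proof.
  intros Hc.
  assert (Hex : forall N n, (n <= N)%nat -> ex_derive (fun t => inv_coef (c t) m n) t0).
  { induction N; intros n Hn.
    - replace n with 0%nat by lia. apply (ex_derive_const 1 t0).
    - destruct n as [|n]; [apply (ex_derive_const 1 t0)|].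
      apply ex_derive_ext with
        (fun t => sum_f_R0 (fun j => if Nat.leb (S j) m then c t (S j) * inv_coef (c t) m (n - j)%nat else 0) n).
      + intros t; symmetry; apply inv_coef_S.
      + apply (ex_derive_sumf (fun j t => if Nat.leb (S j) m then c t (S j) * inv_coef (c t) m (n - j)%nat else 0)).
        intros j Hj. destruct (Nat.leb (S j) m).
        * apply (ex_derive_mult (fun t => c t (S j)) (fun t => inv_coef (c t) m (n - j)%nat)).
          -- eexists; apply Hc.
          -- apply IHN; lia.
        * apply (ex_derive_const 0 t0). }
  exists (fun n => Derive (fun t => inv_coef (c t) m n) t0).
  assert (Hs : sder (fun t => inv_coef (c t) m) t0 (fun n => Derive (fun t => inv_coef (c t) m n) t0)).
  { intros n. apply Derive_correct. apply (Hex n n). lia. }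
  split; auto.
  intros n.
  pose proof (sder_cauchy _ _ _ _ t0 (sder_poly c c' m t0 Hc) Hs n) as H1.
  simpl in H1.
  assert (H2 : is_derive (fun t => cauchy (poly_coef (c t) m) (inv_coef (c t) m) n) t0 0).
  { eapply is_derive_ext; [|apply (is_derive_const (if Nat.eqb n 0 then 1 else 0) t0)].
    intros t; simpl. symmetry; apply inv_identity. }
  apply is_derive_unique in H1. apply is_derive_unique in H2.
  pose proof (eq_trans (eq_sym H1) H2) as H3. simpl in H3. lra.
Qed.

Lemma EB_frac0 x : x = 0 -> EB (frac_coef x).
Proof. intros Hx. apply EB_ext with (fun n => if Nat.eqb n 0 then 1 else 0).
  intros n; apply frac_coef_zero; auto. apply EB_delta. Qed.

Fixpoint csn (f : nat -> C) (n : nat) : C :=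
  match n with O => f O | S k => Cplus (csn f k) (f (S k)) end.

Lemma csn_ext (f g : nat -> C) n : (forall i, f i = g i) -> csn f n = csn g n.
Proof. intros H; induction n; simpl; rewrite ?IHn, ?H; reflexivity. Qed.

Module FTA.
From mathcomp Require Import all_boot all_algebra.
From mathcomp Require Import Rstruct complex.
Import GRing.Theory.
Local Open Scope ring_scope.

Definition toM (c : C) : R[i] := Complex (fst c) (snd c).
Definition ofM (x : R[i]) : C := (Re x, Im x).

Lemma ofM_mul x y : ofM (x * y) = Cmult (ofM x) (ofM y).
Proof. by case: x => a b; case: y => c d. Qed.
Lemma ofM_add x y : ofM (x + y) = Cplus (ofM x) (ofM y).
Proof. by case: x => a b; case: y => c d. Qed.
Lemma ofM_toM c : ofM (toM c) = c.
Proof. by case: c. Qed.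
Lemma ofM_one : ofM 1 = RtoC 1%R.
Proof. by []. Qed.
Lemma ofM_exp x k : ofM (x ^+ k) = Cpow (ofM x) k.
Proof.
elim: k => [|k IH]; first by [].
by rewrite exprS ofM_mul IH.
Qed.
Lemma ofM_sum n (f : nat -> R[i]) :
  ofM (\sum_(i < n.+1) f i) = csn (fun i => ofM (f i)) n.
Proof.
elim: n => [|n IH]; first by rewrite big_ord1.
by rewrite big_ord_recr ofM_add IH.
Qed.

Lemma fta n (P : nat -> C) : exists x : C,
  Cpow x (S n) = csn (fun i => Cmult (P i) (Cpow x i)) n.
Proof.
have [x Hx] := @solve_monicpoly (R[i]) n.+1 (fun i => toM (P i)) erefl.
exists (ofM x).
rewrite -ofM_exp Hx (ofM_sum n (fun i => toM (P i) * x ^+ i)).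
apply: csn_ext => i; by rewrite ofM_mul ofM_toM ofM_exp.
Qed.
End FTA.
Set Bullet Behavior "Strict Subproofs".
Open Scope R_scope.
Definition fta := FTA.fta.
Definition ccau (u v : nat -> C) (n : nat) : C := csn (fun j => Cmult (u j) (v (n - j)%nat)) n.
Definition peval (p : nat -> C) (m : nat) (z : C) : C := csn (fun j => Cmult (p j) (Cpow z j)) m.
Definition EC (u : nat -> C) := exists K rho, 0 <= rho < 1 /\ forall n, Cmod (u n) <= K * rho ^ n.

Lemma csn_ext_loc (f g : nat -> C) n : (forall i, (i <= n)%nat -> f i = g i) -> csn f n = csn g n.
Proof. induction n; intros H; simpl; [apply H; lia|]. rewrite IHn, H by (intros; try apply H; lia). reflexivity. Qed.

Lemma csn_plus f g n : csn (fun j => Cplus (f j) (g j)) n = Cplus (csn f n) (csn g n).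
Proof. induction n; simpl; [reflexivity|]. rewrite IHn. ring. Qed.

Lemma csn_minus f g n : csn (fun j => Cminus (f j) (g j)) n = Cminus (csn f n) (csn g n).
Proof. induction n; simpl; [reflexivity|]. rewrite IHn. ring. Qed.

Lemma csn_scal a f n : csn (fun j => Cmult a (f j)) n = Cmult a (csn f n).
Proof. induction n; simpl; [reflexivity|]. rewrite IHn. ring. Qed.

Lemma csn_opp f n : csn (fun j => Copp (f j)) n = Copp (csn f n).
Proof. induction n; simpl; [reflexivity|]. rewrite IHn. ring. Qed.

Lemma csn_shift f n : csn f (S n) = Cplus (f 0%nat) (csn (fun j => f (S j)) n).
Proof. induction n; simpl; [reflexivity|]. simpl in IHn. rewrite IHn. ring. Qed.

Lemma csn_zero_tail f n : (forall j, (1 <= j)%nat -> f j = RtoC 0) -> csn f n = f 0%nat.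
Proof. intros H; induction n; simpl; [reflexivity|]. rewrite IHn, (H (S n)) by lia. ring. Qed.

Lemma peval_S p n z : peval p (S n) z = Cplus (peval p n z) (Cmult (p (S n)) (Cpow z (S n))).
Proof. reflexivity. Qed.

Lemma peval_0 p n : peval p n (RtoC 0) = p 0%nat.
Proof.
  unfold peval. rewrite csn_zero_tail.
  - simpl. ring.
  - intros j Hj. destruct j; [lia|]. simpl. ring.
Qed.

Lemma Cmod_sum_le f n : Cmod (csn f n) <= sum_f_R0 (fun j => Cmod (f j)) n.
Proof.
  induction n; simpl; [lra|]. eapply Rle_trans; [apply Cmod_triangle|]. lra.
Qed.

Lemma EC_step (s s' : nat -> C) (r : C) :
  1 < Cmod r -> r <> RtoC 0 ->
  (forall n, s' n = Cminus (s n) (match n with O => RtoC 0 | S k => Cdiv (s k) r end)) ->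
  EC s' -> EC s.
Proof.
  intros Hr Hr0 Hs' [K [rho [Hrho Hb]]].
  assert (HK : 0 <= K).
  { specialize (Hb 0%nat). simpl in Hb. pose proof (Cmod_ge_0 (s' 0%nat)). lra. }
  set (r1 := / Cmod r).
  assert (Hr1 : 0 < r1 < 1).
  { unfold r1. split; [apply Rinv_0_lt_compat; lra|].
    rewrite <- Rinv_1. apply Rinv_lt_contravar; lra. }
  set (rm := Rmax rho r1).
  assert (Hrm : 0 <= rm < 1) by (unfold rm, Rmax; destruct Rle_dec; lra).
  assert (Hrho_rm : rho <= rm) by apply Rmax_l.
  assert (Hr1_rm : r1 <= rm) by apply Rmax_r.
  assert (Hmain : forall n, Cmod (s n) <= K * ((INR n + 1) * rm ^ n)).
  { induction n.
    - specialize (Hb 0%nat). rewrite Hs' in Hb. simpl in *.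
      replace (Cminus (s 0%nat) (RtoC 0)) with (s 0%nat) in Hb by ring. lra.
    - assert (E : s (S n) = Cplus (s' (S n)) (Cdiv (s n) r)) by (rewrite Hs'; ring).
      rewrite E. eapply Rle_trans; [apply Cmod_triangle|].
      rewrite Cmod_div by auto.
      specialize (Hb (S n)).
      assert (rho ^ S n <= rm ^ S n) by (apply pow_incr; lra).
      assert (Cmod (s n) / Cmod r <= K * ((INR n + 1) * rm ^ n) * r1).
      { unfold Rdiv, r1. apply Rmult_le_compat_r; [left; apply Rinv_0_lt_compat; lra|auto]. }
      assert (K * ((INR n + 1) * rm ^ n) * r1 <= K * ((INR n + 1) * rm ^ S n)).
      { simpl. pose proof (pos_INR n). assert (0 <= rm ^ n) by (apply pow_le; lra).
        assert (0 <= K * (INR n + 1) * rm ^ n) by (repeat apply Rmult_le_pos; lra).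
        replace (K * ((INR n + 1) * rm ^ n) * r1) with ((K * (INR n + 1) * rm ^ n) * r1) by ring.
        replace (K * ((INR n + 1) * (rm * rm ^ n))) with ((K * (INR n + 1) * rm ^ n) * rm) by ring.
        apply Rmult_le_compat_l; auto. }
      rewrite S_INR.
      assert (K * rho ^ S n <= K * rm ^ S n) by (apply Rmult_le_compat_l; auto).
      nra. }
  destruct (slack rm Hrm) as [sg [K2 [Hsg [HK2 Hb2]]]].
  exists (K * K2), sg. split; auto. intros n.
  eapply Rle_trans; [apply Hmain|]. rewrite Rmult_assoc. apply Rmult_le_compat_l; auto.
Qed.

Theorem partB m : forall p : nat -> C, p 0%nat = RtoC 1 ->
  (forall j, (m < j)%nat -> p j = RtoC 0) ->
  (forall z, Cmod z <= 1 -> peval p m z <> RtoC 0) ->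
  forall s f, (forall n, ccau p s n = f n) -> EC f -> EC s.
Proof.
  induction m as [|m IH]; intros p hp0 hpz hroot s f hsf hf.
  -
    destruct hf as [K [rho [Hr Hb]]]. exists K, rho. split; auto. intros n.
    specialize (Hb n). rewrite <- (hsf n) in Hb. unfold ccau in Hb.
    rewrite csn_zero_tail in Hb.
    + rewrite hp0, Nat.sub_0_r in Hb. replace (Cmult (RtoC 1) (s n)) with (s n) in Hb by ring. auto.
    + intros j Hj. rewrite hpz by lia. ring.
  - destruct (classic (p (S m) = RtoC 0)) as [Hz|Hnz].
    + apply (IH p hp0) with f; auto.
      * intros j Hj. destruct (Nat.eq_dec j (S m)) as [->|]; auto. apply hpz; lia.
      * intros z Hz' Heq. apply (hroot z Hz'). rewrite peval_S, Heq, Hz. ring.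
    + destruct (fta m (fun i => Cdiv (Copp (p i)) (p (S m)))) as [r Hr].
      assert (Hpr : peval p (S m) r = RtoC 0).
      { rewrite peval_S, Hr, <- csn_scal.
        rewrite (csn_ext _ (fun j => Copp (Cmult (p j) (Cpow r j)))).
        - rewrite csn_opp. unfold peval. ring.
        - intros i. field. auto. }
      assert (Hr0 : r <> RtoC 0).
      { intros ->. rewrite peval_0, hp0 in Hpr. apply C1_nz; auto. }
      assert (Hr1 : 1 < Cmod r).
      { destruct (Rlt_le_dec 1 (Cmod r)) as [h|h]; auto. exfalso. apply (hroot r h Hpr). }
      set (q := fun j => Cdiv (peval p j r) (Cpow r j)).
      assert (Hq0 : q 0%nat = RtoC 1).
      { unfold q, peval. simpl. rewrite hp0. field. }
      assert (Hstab : forall j, (S m <= j)%nat -> peval p j r = peval p (S m) r).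
      { induction j; intros Hj; [lia|].
        destruct (Nat.eq_dec j m) as [->|Hne]; [reflexivity|].
        rewrite peval_S, IHj by lia. rewrite hpz by lia. ring. }
      assert (Hqz : forall j, (m < j)%nat -> q j = RtoC 0).
      { intros j Hj. unfold q. rewrite Hstab by lia. rewrite Hpr. field. apply Cpow_nz; auto. }
      assert (Hpq : forall j, p (S j) = Cminus (q (S j)) (Cdiv (q j) r)).
      { intros j. unfold q. rewrite peval_S. simpl Cpow. field.
        split; auto. apply Cpow_nz; auto. }
      assert (Hfac : forall N z, peval p (S N) z =
                Cminus (peval q (S N) z) (Cmult (Cdiv z r) (peval q N z))).
      { induction N; intros z.
        - unfold peval; simpl. rewrite Hpq, hp0, Hq0. field. auto.
        - rewrite (peval_S p (S N)), IHN, (peval_S q (S N)), (peval_S q N), Hpq.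
          rewrite (Cpow_S z (S N)). field. auto. }
      assert (Hqroot : forall z, Cmod z <= 1 -> peval q m z <> RtoC 0).
      { intros z Hz Heq. apply (hroot z Hz). rewrite Hfac, peval_S, Heq, (Hqz (S m)) by lia. ring. }
      set (s' := fun n => Cminus (s n) (match n with O => RtoC 0 | S k => Cdiv (s k) r end)).
      assert (Hs' : forall n, ccau q s' n = f n).
      { intros n. rewrite <- hsf.
        set (e := fun j => match j with O => RtoC 0 | S k => Cdiv (q k) r end).
        assert (Hpe : forall j, p j = Cminus (q j) (e j)).
        { intros [|j]; simpl; [rewrite hp0, Hq0; ring| apply Hpq]. }
        unfold ccau.
        rewrite (csn_ext (fun j => Cmult (p j) (s (n - j)%nat))
                   (fun j => Cminus (Cmult (q j) (s (n - j)%nat)) (Cmult (e j) (s (n - j)%nat))))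
          by (intros j; rewrite Hpe; ring).
        rewrite (csn_ext (fun j => Cmult (q j) (s' (n - j)%nat))
                   (fun j => Cminus (Cmult (q j) (s (n - j)%nat))
                      (Cmult (q j) (match (n - j)%nat with O => RtoC 0 | S k => Cdiv (s k) r end))))
          by (intros j; unfold s'; ring).
        rewrite !csn_minus. f_equal.
        destruct n as [|n].
        - simpl. unfold e. ring.
        - rewrite (csn_shift (fun j => Cmult (e j) (s (S n - j)%nat)) n).
          change (csn ?F (S n)) with (Cplus (csn F n) (F (S n))).
          cbv beta. rewrite Nat.sub_diag.
          replace (Cmult (e 0%nat) (s (S n - 0)%nat)) with (RtoC 0) by (unfold e; ring).
          replace (Cmult (q (S n)) (RtoC 0)) with (RtoC 0) by ring.
          rewrite Cplus_0_l, Cplus_0_r.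
          apply csn_ext_loc. intros j Hj.
          replace (S n - j)%nat with (S (n - j)) by lia.
          simpl (S n - S j)%nat. unfold e. field. auto. }
      apply (EC_step s s' r Hr1 Hr0); [intros; reflexivity|].
      apply (IH q Hq0 Hqz Hqroot s' f Hs' hf).
Qed.

Lemma RtoC_sum (f : nat -> R) n : RtoC (sum_f_R0 f n) = csn (fun j => RtoC (f j)) n.
Proof. induction n; simpl; [reflexivity|]. rewrite <- IHn. apply RtoC_plus. Qed.

Lemma peval_lag c m z : peval (fun j => RtoC (poly_coef c m j)) m z = lagpoly c m z.
Proof.
  unfold lagpoly.
  assert (H : forall N, (N <= m)%nat ->
     peval (fun j => RtoC (poly_coef c m j)) N z = Cminus (RtoC 1) (csum c N z)).
  { induction N; intros HN.
    - unfold peval; simpl. unfold poly_coef. ring.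
    - rewrite peval_S, IHN by lia. simpl csum.
      unfold poly_coef. replace (Nat.leb (S N) m) with true by (symmetry; apply Nat.leb_le; lia).
      rewrite RtoC_opp. simpl Cpow. ring. }
  apply H; lia.
Qed.

Theorem partB_R (c : nat -> R) m : roots_outside_unit_disk c m ->
  forall s f, (forall n, cauchy (poly_coef c m) s n = f n) -> EB f -> EB s.
Proof.
  intros Hroot s f Hsf Hf.
  assert (H : EC (fun n => RtoC (s n))).
  { apply (partB m (fun j => RtoC (poly_coef c m j))) with (fun n => RtoC (f n)).
    - reflexivity.
    - intros j Hj. unfold poly_coef. destruct j; [lia|].
      replace (Nat.leb (S j) m) with false by (symmetry; apply Nat.leb_gt; lia). reflexivity.
    - intros z Hz. rewrite peval_lag. apply Hroot; auto.
    - intros n. rewrite <- Hsf. unfold ccau, cauchy. rewrite RtoC_sum.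
      apply csn_ext. intros j. symmetry; apply RtoC_mult.
    - destruct Hf as [K [r [Hr Hb]]]. exists K, r. split; auto. intros n. rewrite Cmod_R. auto. }
  destruct H as [K [r [Hr Hb]]]. exists K, r. split; auto. intros n.
  specialize (Hb n). rewrite Cmod_R in Hb. auto.
Qed.

Lemma EB_inv c m : roots_outside_unit_disk c m -> EB (inv_coef c m).
Proof.
  intros H. apply (partB_R c m H (inv_coef c m) (fun n => if Nat.eqb n 0 then 1 else 0)).
  - intros n; apply inv_identity.
  - apply EB_delta.
Qed.

Lemma EB_plus u v : EB u -> EB v -> EB (fun n => u n + v n).
Proof.
  intros Hu Hv. destruct (EB_K u Hu) as [K1 [r1 [HK1 [Hr1 H1]]]].
  destruct (EB_K v Hv) as [K2 [r2 [HK2 [Hr2 H2]]]].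
  set (r := Rmax r1 r2).
  assert (Hr : 0 <= r < 1) by (unfold r; unfold Rmax; destruct Rle_dec; lra).
  exists (K1 + K2), r. split; auto. intros n.
  assert (r1 ^ n <= r ^ n) by (apply pow_incr; unfold r; split; [lra| apply Rmax_l]).
  assert (r2 ^ n <= r ^ n) by (apply pow_incr; unfold r; split; [lra| apply Rmax_r]).
  pose proof (Rabs_triang (u n) (v n)). specialize (H1 n); specialize (H2 n).
  assert (K1 * r1 ^ n <= K1 * r ^ n) by (apply Rmult_le_compat_l; auto).
  assert (K2 * r2 ^ n <= K2 * r ^ n) by (apply Rmult_le_compat_l; auto).
  lra.
Qed.

Ltac solveE := cbv beta; first
  [ apply EB_plus; solveE | apply EB_cauchy; solveE | assumption ].
Ltac solveW := cbv beta; first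
  [ apply WB_plus; solveW | apply EB_WB; solveE
  | apply WE_cauchy; [solveW|solveE] | apply EW_cauchy; [solveE|solveW] | assumption ].

Section Main.
Variables (p q : nat) (a b : nat -> R) (d0 : R).
Let th := theta0 p q a b d0.

Lemma upd_self k j : upd th k (th k) j = th j.
Proof. unfold upd. destruct (Nat.eqb_spec j k); subst; reflexivity. Qed.

Lemma theta_b j : (1 <= j <= q)%nat -> th (p + j)%nat = b j.
Proof.
  intros Hj. unfold th, theta0.
  replace (Nat.leb (p + j) p) with false by (symmetry; apply Nat.leb_gt; lia).
  replace (Nat.leb (p + j) (p + q)) with true by (symmetry; apply Nat.leb_le; lia).
  f_equal; lia.
Qed.

Lemma theta_d : th (p + q + 1)%nat = d0.
Proof.
  unfold th, theta0.
  replace (Nat.leb (p + q + 1) p) with false by (symmetry; apply Nat.leb_gt; lia).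
  replace (Nat.leb (p + q + 1) (p + q)) with false by (symmetry; apply Nat.leb_gt; lia).
  reflexivity.
Qed.

Lemma is_derive_upd k t0 j : is_derive (fun t => upd th k t j) t0 (if Nat.eqb j k then 1 else 0).
Proof.
  unfold upd. destruct (Nat.eqb j k).
  - apply (is_derive_id t0).
  - apply (is_derive_const (th j) t0).
Qed.

Lemma per_k k : roots_outside_unit_disk a p -> roots_outside_unit_disk b q ->
  exists K, forall i, (1 <= i)%nat -> exists l,
    is_derive (fun t => lambda p q a b d0 (upd th k t) i) (th k) l /\ Rabs l <= K / INR i.
Proof.
  intros Ha Hb.
  set (t0 := th k).
  assert (Hrc : roots_outside_unit_disk (fun j => upd th k t0 (p + j)%nat) q).
  { apply (roots_ext b); auto. intros j Hj. unfold t0. rewrite upd_self, theta_b; auto. }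
  destruct (sder_inv (fun t j => upd th k t (p + j)%nat) (fun j => if Nat.eqb (p + j) k then 1 else 0)
             t0 q (fun j => is_derive_upd k t0 (p + j)%nat)) as [e' [H1 Hid]].
  assert (HE1' : EB e').
  { apply (partB_R _ q Hrc e' _ Hid). apply EB_opp. apply EB_cauchy.
    apply EB_poly_der. apply EB_inv; auto. }
  assert (HE1 : EB (inv_coef (fun j => upd th k t0 (p + j)%nat) q)) by (apply EB_inv; auto).
  pose proof (sder_poly (fun t => upd th k t) (fun j => if Nat.eqb j k then 1 else 0) p t0
                (fun j => is_derive_upd k t0 j)) as H2.
  assert (HE2 : EB (poly_coef (upd th k t0) p)) by apply EB_poly_coef.
  assert (HE2' : EB (poly_der (fun j => if Nat.eqb j k then 1 else 0) p)) by apply EB_poly_der.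
  set (g' := if Nat.eqb (p + q + 1) k then 1 else 0).
  assert (Hg0 : upd th k t0 (p + q + 1)%nat - d0 = 0).
  { unfold t0. rewrite upd_self, theta_d. ring. }
  assert (Hg : is_derive (fun t => upd th k t (p + q + 1)%nat - d0) t0 g').
  { eapply is_derive_eq.
    - apply (is_derive_minus (fun t => upd th k t (p + q + 1)%nat) (fun _ => d0)).
      apply is_derive_upd. apply (is_derive_const d0 t0).
    - simpl. unfold g', minus, plus, opp, zero; simpl. ring. }
  pose proof (sder_frac (fun t => upd th k t (p + q + 1)%nat - d0) g' t0 Hg0 Hg) as H3.
  assert (HE3 : EB (frac_coef (upd th k t0 (p + q + 1)%nat - d0))) by (apply EB_frac0; auto).
  assert (HW3 : WB (fun n => g' * fracD n)) by apply WB_fracD.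
  assert (HA : EB (inv_coef a p)) by (apply EB_inv; auto).
  assert (HB : EB (poly_coef b q)) by apply EB_poly_coef.
  assert (HZ : EB (fun _ : nat => 0)) by apply EB_zero.
  pose proof (sder_cauchy _ _ _ _ t0 H1 H2) as H12.
  pose proof (sder_cauchy _ _ _ _ t0 H12 H3) as H123.
  pose proof (sder_cauchy _ _ _ _ t0 H123 (sder_const (inv_coef a p) t0)) as H1234.
  pose proof (sder_cauchy _ _ _ _ t0 H1234 (sder_const (poly_coef b q) t0)) as Hall.
  match type of Hall with sder _ _ ?L =>
    assert (HW : WB L) by solveW;
    destruct (WB_K _ HW) as [K [HK HKb]];
    exists K; intros i Hi; exists (L i); split; [exact (Hall i)|]
  end.
  specialize (HKb i). cbv beta in HKb |- *.
  assert (Hi1 : 1 <= INR i) by (apply (le_INR 1 i); auto).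
  match goal with |- Rabs ?x <= _ => set (y := x) in * end.
  pose proof (Rabs_pos y).
  apply Rle_div_r; [lra|]. nra.
Qed.

End Main.

Lemma finite_max (P : nat -> R -> Prop) :
  (forall k C C', C <= C' -> P k C -> P k C') ->
  forall N, (forall k, (1 <= k <= N)%nat -> exists C, P k C) ->
  exists C, forall k, (1 <= k <= N)%nat -> P k C.
Proof.
  intros Hmono N. induction N; intros H.
  - exists 0. intros k Hk; lia.
  - destruct IHN as [C1 HC1]. { intros k Hk; apply H; lia. }
    destruct (H (S N)) as [C2 HC2]; [lia|].
    exists (Rmax C1 C2). intros k Hk.
    destruct (Nat.eq_dec k (S N)) as [->|Hne].
    + apply Hmono with C2; auto. apply Rmax_r.
    + apply Hmono with C1; [apply Rmax_l|]. apply HC1; lia.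
Qed.

Theorem lemma3 (p q : nat) (a b : nat -> R) (d0 : R) :
  -1/2 < d0 < 1/2 ->
  roots_outside_unit_disk a p ->
  roots_outside_unit_disk b q ->
  no_common_factor a p b q ->
  exists K : R,
    forall i k : nat, (1 <= i)%nat -> (1 <= k <= p + q + 1)%nat ->
      exists l : R,
        is_derive (fun t : R => lambda p q a b d0 (upd (theta0 p q a b d0) k t) i)
                  (theta0 p q a b d0 k) l
        /\ Rabs l <= K / INR i.
Proof.
  intros _ Ha Hb _.
  destruct (finite_max (fun k K => forall i, (1 <= i)%nat -> exists l : R,
        is_derive (fun t : R => lambda p q a b d0 (upd (theta0 p q a b d0) k t) i)
                  (theta0 p q a b d0 k) l
        /\ Rabs l <= K / INR i)) with (N := (p + q + 1)%nat) as [K HK].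
  - intros k C C' HC HP i Hi. destruct (HP i Hi) as [l [Hl1 Hl2]]. exists l. split; auto.
    apply Rle_trans with (C / INR i); auto.
    assert (1 <= INR i) by (apply (le_INR 1 i); auto).
    unfold Rdiv. apply Rmult_le_compat_r; auto. left; apply Rinv_0_lt_compat; lra.
  - intros k _. apply per_k; auto.
  - exists K. intros i k Hi Hk. apply HK; auto.
Qed.
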